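(* In the standard LLP setup, fix $N\ge1$. If there is no starting error in $L(G,\gamma^N_{cons})$, i.e. $f^N_{cons}(\epsilon)\neq\emptyset$, then there is no run-time error in $L(G,\gamma^N_{cons})$, i.e. $f^N_{cons}(s)\neq\emptyset$ for all $s\in L(G,\gamma^N_{cons})$.
   Context: Standard LLP setup. $\Sigma=\Sigma_c\,\dot\cup\,\Sigma_{uc}$ is a finite alphabet partitioned into controllable and uncontrollable events. The plant $G$ has generated language $L(G)$ and marked language $L_m(G)$ with $L(G)=\overline{L_m(G)}$ ($\overline{M}$ = set of prefixes of strings in $M$). The legal language $K\subseteq L_m(G)$ satisfies $K=\overline{K}\cap L_m(G)$. For a prefix-closed $L$, $M$ is controllable w.r.t. $L$ if $\overline{M}\Sigma_{uc}\cap L\subseteq\overline{M}$. For a language $L$ and $s\in\Sigma^*$: $L/s=\{t: st\in L\}$; $L|_N=\{t\in L:|t|\le N\}$; $\Sigma_{L(G)}(s)=\{\sigma\in\Sigma: s\sigma\in L(G)\}$. $M^{\uparrow/s|_N}$ is the supremal sublanguage of $M$ controllable w.r.t. $L(G)/s|_N$. Conservative attitude: $f^N_{cons}(s)=[K/s|_{N-1}]^{\uparrow/s|_N}$; control policy $\gamma^N_{cons}(s)=(\overline{f^N_{cons}(s)}\cap\Sigma)\cup(\Sigma_{uc}\cap\Sigma_{L(G)}(s))$. Closed-loop language $L(G,\gamma)$: $\epsilon\in L(G,\gamma)$, and $s\sigma\in L(G,\gamma)$ iff $s\in L(G,\gamma)$, $s\sigma\in L(G)$, $\sigma\in\gamma(s)$.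 A run-time error occurs at $s$ if $s\in L(G,\gamma^N)$ and $f^N(s)=\emptyset$; a starting error is a run-time error at $s=\epsilon$. *)

(* Defs.v *)
From mathcomp Require Import all_boot.
Set Implicit Arguments. Unset Strict Implicit. Unset Printing Implicit Defensive.

Definition lang (T : Type) := seq T -> Prop.

Section LLP.
Variable T : finType.

Definition pclos (M : lang T) : lang T := fun u => exists v, M (u ++ v).

Definition subl (M1 M2 : lang T) : Prop := forall u, M1 u -> M2 u.

Definition controllable (uc : pred T) (M L : lang T) : Prop :=
  forall u (a : T), pclos M u -> uc a -> L (rcons u a) -> pclos M (rcons u a).

Definition supC (uc : pred T) (M L : lang T) : lang T :=
  fun t => exists M', subl M' M /\ controllable uc M' L /\ M' t.

Definition quot (L : lang T) (s : seq T) : lang T := fun t => L (s ++ t).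

Definition trunc (L : lang T) (N : nat) : lang T := fun t => L t /\ size t <= N.

(* conservative attitude: f^N_cons(s) = [K/s|_{N-1}]^{uparrow / s|_N},
   where L(G) = pclos Lm *)
Definition f_cons (uc : pred T) (Lm K : lang T) (N : nat) (s : seq T) : lang T :=
  supC uc (trunc (quot K s) N.-1) (trunc (quot (pclos Lm) s) N).

Definition gamma_cons (uc : pred T) (Lm K : lang T) (N : nat) (s : seq T) (a : T)
  : Prop :=
  pclos (f_cons uc Lm K N s) [:: a] \/ (uc a /\ pclos Lm (rcons s a)).

Inductive closed_loop (L : lang T) (gamma : seq T -> T -> Prop) : lang T :=
| cl_nil : closed_loop L gamma [::]
| cl_step s a : closed_loop L gamma s -> L (rcons s a) -> gamma s a ->
                closed_loop L gamma (rcons s a).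

Definition nonempty (M : lang T) : Prop := exists t, M t.

End LLP.

(* Main.v *)
Require Import Defs.
From mathcomp Require Import all_boot.
From mathcomp Require Import zify.

Lemma step_lem (T : finType) (uc : pred T) (Lm K : lang T) (N : nat) s a
  (M : lang T) v :
  subl M (trunc (quot K s) N.-1) ->
  controllable uc M (trunc (quot (pclos Lm) s) N) ->
  M (a :: v) -> nonempty (f_cons uc Lm K N (rcons s a)).
Proof.
move=> Hs Hc Hv.
exists v; exists (fun t => M (a :: t)); split; last split; last by [].
- move=> t /Hs [Ht Hsz]; split.
    by rewrite /quot cat_rcons.
  by move: Hsz => /= H; lia.
- move=> u b [w Hw] Hb [Hl Hsz].
  have Hsz2 : size (a :: u ++ w) <= N.-1 by case: (Hs _ Hw).
  have : pclos M (rcons (a :: u) b).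
    apply: Hc => //.
      by exists w.
    split.
      by move: Hl; rewrite /quot cat_rcons.
    move: Hsz2; rewrite size_rcons /= size_cat => H; lia.
  by case=> x Hx; exists x.
Qed.

Theorem theorem6 (T : finType) (uc : pred T) (Lm K : lang T) (N : nat) :
  subl K Lm ->
  (forall t, K t <-> (pclos K t /\ Lm t)) ->
  1 <= N ->
  nonempty (f_cons uc Lm K N [::]) ->
  forall s, closed_loop (pclos Lm) (gamma_cons uc Lm K N) s ->
    nonempty (f_cons uc Lm K N s).
Proof.
move=> _ _ HN H0 s0 Hcl; elim: Hcl => [//| s a _ IH HL [Hg|[Huc HLa]]].
- case: Hg => v [M [Hs [Hc HM]]].
  exact: (@step_lem _ _ _ _ _ _ _ _ _ Hs Hc HM).
- case: IH => t [M [Hs [Hc HM]]].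
  have : pclos M (rcons [::] a).
    apply: Hc => //; first by exists t.
    split => //; by rewrite /quot cats1.
  case=> v HMv; exact: (@step_lem _ _ _ _ _ _ _ _ _ Hs Hc HMv).
Qed.
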